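(* Let $(X_j,Y_j,S_j)$, $j\in\mathbb{Z}$, be a FAIM process, and let $\Delta H_n=H_n-\hat H_n$. Then $\lim_{n\to\infty}\mathbb{E}[\Delta H_n]=0$.
   Context: FAIM process: $(X_j,Y_j,S_j)$, $j\in\mathbb{Z}$, is strictly stationary, $X_j\in\{0,1\}$, $Y_j$ takes values in a finite alphabet, $S_j$ in a finite set $\mathcal{S}$; the conditional law $P_{X_j,Y_j,S_j|S_{j-1}}$ does not depend on $j$; and conditioned on $S_{j-1}$, $\{X_k,Y_k,S_k\}_{k\ge j}$ is independent of $\{X_l,Y_l,S_{l-1}\}_{l<j}$. The state sequence $(S_j)$ is a homogeneous, finite-state, stationary, aperiodic and irreducible Markov chain. Polarization setup: $N=2^n$, $G_N=B_NG_2^{\otimes n}$ with $G_2=\begin{bmatrix}1&0\\1&1\end{bmatrix}$ and $B_N$ the bit-reversal permutation matrix (arithmetic mod 2); $U_1^N=X_1^NG_N$, $Q_i=(U_1^{i-1},Y_1^N)$; $B_1,B_2,\dots$ i.i.d. Bernoulli$(1/2)$ and $i-1=\sum_{j=1}^nB_j2^{n-j}$. With $H(\cdot|\cdot)$ the conditional entropy in bits, $H_n=H(U_i|Q_i)$ and $\hat H_n=H(U_i|Q_i,S_N,S_0)$. *)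

(* Defs.v *)
From HB Require Import structures.
From mathcomp Require Import all_boot all_order all_algebra.
From mathcomp Require Import all_classical all_reals all_analysis.

Set Implicit Arguments.
Unset Strict Implicit.
Unset Printing Implicit Defensive.

Import Order.TTheory GRing.Theory Num.Theory.
Local Open Scope classical_set_scope.
Local Open Scope ring_scope.

Section Entropy.
Context {R : realType} {d : measure_display} {T : measurableType d}.
Variable P : probability T R.

Definition prob (E : set T) : R := fine (P E).

Definition pmf {V : finType} (Z : T -> V) (v : V) : R :=
  prob [set w | Z w = v].

Definition log2 (x : R) : R := ln x / ln 2.

(* H(Z) = - sum_v p(v) log2 p(v)   (ln 0 = 0, so 0 log 0 = 0) *)
Definition entropy {V : finType} (Z : T -> V) : R :=
  - \sum_(v : V) pmf Z v * log2 (pmf Z v).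

Definition centropy {V W : finType} (U : T -> V) (Q : T -> W) : R :=
  entropy (fun w => (U w, Q w)) - entropy Q.

End Entropy.

Section FAIM.
Context {R : realType} {d : measure_display} {T : measurableType d}.
Variable P : probability T R.
Variables (A St : finType).
Variables (X : int -> T -> bool) (Y : int -> T -> A) (S : int -> T -> St).

Definition Zt (j : int) (w : T) : bool * A * St := (X j w, Y j w, S j w).

Definition window (a : int) (m : nat) (w : T) : {ffun 'I_m -> bool * A * St} :=
  [ffun i : 'I_m => Zt (a + (i : nat)%:Z) w].

Definition past_window (j : int) (p : nat) (w : T) : {ffun 'I_p -> bool * A * St} :=
  [ffun i : 'I_p => (X (j - 1 - (i : nat)%:Z) w, Y (j - 1 - (i : nat)%:Z) w,
                     S (j - 2 - (i : nat)%:Z) w)].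

Definition trans (s t : St) : R :=
  prob P [set w | S 0 w = s /\ S 1 w = t] / prob P [set w | S 0 w = s].

Fixpoint trans_pow (k : nat) (s t : St) : R :=
  match k with
  | 0 => if s == t then 1 else 0
  | k.+1 => \sum_(u : St) trans_pow k s u * trans u t
  end.

Definition chain_irreducible : Prop :=
  forall s t : St, exists k : nat, (0 < k)%N /\ 0 < trans_pow k s t.

(* the period of every state (gcd of its return times) is 1 *)
Definition chain_aperiodic : Prop :=
  forall (s : St) (dd : nat),
    (forall k : nat, (0 < k)%N -> 0 < trans_pow k s s -> (dd %| k)%N) -> dd = 1%N.

Record FAIM : Prop := {
  FAIM_meas_X : forall j x, measurable [set w | X j w = x];
  FAIM_meas_Y : forall j y, measurable [set w | Y j w = y];
  FAIM_meas_S : forall j s, measurable [set w | S j w = s];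
  (* strict stationarity (all finite-dimensional distributions are
     shift invariant; contiguous windows suffice) *)
  FAIM_stationary : forall (a : int) (m : nat) (z : {ffun 'I_m -> bool * A * St}),
      prob P [set w | window a m w = z] = prob P [set w | window 0 m w = z];
  (* P_{X_j,Y_j,S_j | S_{j-1}} does not depend on j (cross-multiplied form) *)
  FAIM_time_invariant : forall (j : int) (z : bool * A * St) (s : St),
      prob P [set w | Zt j w = z /\ S (j - 1) w = s] * prob P [set w | S 0 w = s]
      = prob P [set w | Zt 1 w = z /\ S 0 w = s] * prob P [set w | S (j - 1) w = s];
  (* given S_{j-1}, {X_k,Y_k,S_k}_{k>=j} is independent of
     {X_l,Y_l,S_{l-1}}_{l<j} (all finite subfamilies) *)
  FAIM_cond_indep : forall (j : int) (m p : nat)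
      (f : {ffun 'I_m -> bool * A * St}) (g : {ffun 'I_p -> bool * A * St}) (s : St),
      prob P [set w | window j m w = f /\ past_window j p w = g /\ S (j - 1) w = s]
        * prob P [set w | S (j - 1) w = s]
      = prob P [set w | window j m w = f /\ S (j - 1) w = s]
        * prob P [set w | past_window j p w = g /\ S (j - 1) w = s];
  FAIM_irreducible : chain_irreducible;
  FAIM_aperiodic : chain_aperiodic
}.

End FAIM.

Definition G2 : 'M['F_2]_2 :=
  \matrix_(i < 2, j < 2) (if ((i : nat) == 0%N) && ((j : nat) == 1%N) then 0 else 1).

(* entries of the Kronecker power G_2^{(x)n}, big-endian indices:
   (G_2 (x) M)_{i,j} = G_2(i / 2^n, j / 2^n) * M(i mod 2^n, j mod 2^n) *)
Fixpoint kron_pow_entry (n i j : nat) : 'F_2 :=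
  match n with
  | 0 => if (i == 0%N) && (j == 0%N) then 1 else 0
  | n'.+1 =>
      (if ((i %/ 2 ^ n')%N == 0%N) && ((j %/ 2 ^ n')%N == 1%N) then 0 else 1)
      * kron_pow_entry n' (i %% 2 ^ n')%N (j %% 2 ^ n')%N
  end.

Definition G2_kron (n : nat) : 'M['F_2]_(2 ^ n) :=
  \matrix_(i < 2 ^ n, j < 2 ^ n) kron_pow_entry n i j.

Definition bitrev (n i : nat) : nat :=
  (\sum_(k < n) (odd (i %/ 2 ^ k)) * 2 ^ (n.-1 - k))%N.

Definition B_perm (n : nat) : 'M['F_2]_(2 ^ n) :=
  \matrix_(i < 2 ^ n, j < 2 ^ n) (if (j : nat) == bitrev n i then 1 else 0).

Definition G_N (n : nat) : 'M['F_2]_(2 ^ n) := B_perm n *m G2_kron n.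

Section Polar.
Context {R : realType} {d : measure_display} {T : measurableType d}.
Variable P : probability T R.
Variables (A St : finType).
Variables (X : int -> T -> bool) (Y : int -> T -> A) (S : int -> T -> St).
Variable n : nat.

(* X_1^N as a row vector (entry k is X_{k+1}) *)
Definition Xvec (w : T) : 'rV['F_2]_(2 ^ n) :=
  \row_(k < 2 ^ n) ((X (k.+1 : nat)%:Z w : nat)%:R : 'F_2).

Definition Uvec (w : T) : 'rV['F_2]_(2 ^ n) := Xvec w *m G_N n.

(* U_i for i = k+1 *)
Definition Ui (k : 'I_(2 ^ n)) (w : T) : 'F_2 := Uvec w 0 k.

Definition Yvec (w : T) : {ffun 'I_(2 ^ n) -> A} :=
  [ffun k : 'I_(2 ^ n) => Y (k.+1 : nat)%:Z w].

(* Q_i = (U_1^{i-1}, Y_1^N) for i = k+1; U_1^{i-1} is encoded injectively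
   as the length-N vector whose entries of index >= i-1 are set to 0 *)
Definition Qi (k : 'I_(2 ^ n)) (w : T) : {ffun 'I_(2 ^ n) -> 'F_2} * {ffun 'I_(2 ^ n) -> A} :=
  ([ffun l : 'I_(2 ^ n) => if (l < k)%N then Uvec w 0 l else 0], Yvec w).

Definition Hn_at (k : 'I_(2 ^ n)) : R := centropy P (Ui k) (Qi k).
Definition hatHn_at (k : 'I_(2 ^ n)) : R :=
  centropy P (Ui k) (fun w => (Qi k w, S (2 ^ n)%N%:Z w, S 0 w)).

(* E[Delta H_n], with i uniform on {1,...,N} (B_1..B_n i.i.d. Bernoulli(1/2)) *)
Definition E_DeltaH : R :=
  (2 ^ n)%:R^-1 * \sum_(k < 2 ^ n) (Hn_at k - hatHn_at k).

End Polar.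

(* Main.v *)
Require Import Defs.
From HB Require Import structures.
From mathcomp Require Import all_boot all_order all_algebra.
From mathcomp Require Import all_classical all_reals all_analysis.
From mathcomp Require Import ring lra.

Import Order.TTheory GRing.Theory Num.Theory.
Import numFieldNormedType.Exports.
Local Open Scope classical_set_scope.
Local Open Scope ring_scope.

Section Prob.
Context {R : realType} {d : measure_display} {T : measurableType d}.
Variable P : probability T R.

Definition mlev {V : finType} (F : T -> V) := forall v, measurable [set w | F w = v].

Lemma prob_ge0 E : 0 <= prob P E.
Proof. by apply: fine_ge0; apply: measure_ge0. Qed.

Lemma prob_fin E : measurable E -> P E \is a fin_num.
Proof. by move=> mE; apply: fin_num_measure. Qed.

Lemma prob_le1 E : measurable E -> prob P E <= 1.
Proof.
move=> mE; rewrite /prob -[1]/(fine 1%E).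
by apply: fine_le; [exact: prob_fin | by [] | exact: probability_le1].
Qed.

Lemma prob0 : prob P set0 = 0.
Proof. by rewrite /prob measure0. Qed.

Lemma probU A B : measurable A -> measurable B -> A `&` B = set0 ->
  prob P (A `|` B) = prob P A + prob P B.
Proof.
move=> mA mB AB; rewrite /prob measureU// fineD//; exact: prob_fin.
Qed.

Lemma mlev_mem_sum (I : finType) (F : T -> I) E : mlev F -> measurable E ->
  forall s : seq I, uniq s ->
  measurable [set w | F w \in s] /\
  \sum_(i <- s) prob P (E `&` [set w | F w = i]) = prob P (E `&` [set w | F w \in s]).
Proof.
move=> mF mE; elim=> [|i s IH] /=.
  move=> _; split.
    by rewrite (_ : [set w | _] = set0) //; apply/seteqP; split=> w //=.
  rewrite big_nil (_ : _ `&` _ = set0) ?prob0 //; apply/seteqP; split=> w //=.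
  by case.
move=> /andP[ins us]; have [ms IHs] := IH us.
have -> : [set w | F w \in i :: s] = [set w | F w = i] `|` [set w | F w \in s].
  apply/seteqP; split=> w /=; rewrite inE.
    by case/orP => [/eqP|]; [left|right].
  by case=> [->|->]; rewrite ?eqxx ?orbT.
split; first exact: measurableU.
rewrite big_cons IHs setIUr probU //; try exact: measurableI.
apply/seteqP; split=> w //= [[_ Fi] [_ Fs]].
by move: ins; rewrite -Fi Fs.
Qed.

Lemma mlev_mem (I : finType) (F : T -> I) (s : seq I) : mlev F ->
  measurable [set w | F w \in s].
Proof.
move=> mF; have [] := @mlev_mem_sum I F setT mF measurableT (undup s) (undup_uniq s).
by under eq_set do rewrite mem_undup.
Qed.

Lemma prob_part (I : finType) (F : T -> I) E : mlev F -> measurable E ->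
  \sum_(i : I) prob P (E `&` [set w | F w = i]) = prob P E.
Proof.
move=> mF mE; have [_ H] := @mlev_mem_sum I F E mF mE (enum I) (enum_uniq I).
rewrite -big_enum /= H; congr (prob P _); apply/seteqP; split=> w /=.
  by case.
by move=> Ew; split=> //; rewrite mem_enum.
Qed.

Lemma mlev_comp (V W : finType) (F : T -> V) (h : V -> W) : mlev F -> mlev (fun w => h (F w)).
Proof.
move=> mF u.
have -> : [set w | h (F w) = u] = [set w | F w \in enum [pred v | h v == u]].
  by apply/seteqP; split=> w /=; rewrite mem_enum inE => /eqP.
exact: mlev_mem.
Qed.

Lemma mlev_pair (V W : finType) (F : T -> V) (G : T -> W) : mlev F -> mlev G ->
  mlev (fun w => (F w, G w)).
Proof.
move=> mF mG [a b].
have -> : [set w | (F w, G w) = (a, b)] = [set w | F w = a] `&` [set w | G w = b].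
  by apply/seteqP; split=> w /=; [case=> -> -> | case=> -> ->].
exact: measurableI (mF a) (mG b).
Qed.

Lemma mlev_ffun (I V : finType) (F : I -> T -> V) : (forall i, mlev (F i)) ->
  mlev (fun w => [ffun i => F i w]).
Proof.
move=> mF f.
have H : forall s : seq I, measurable [set w | forall i, i \in s -> F i w = f i].
  elim=> [|i s IH].
    by rewrite (_ : [set w | _] = setT) //; apply/seteqP; split=> w //=.
  have -> : [set w | forall j, j \in i :: s -> F j w = f j] =
     [set w | F i w = f i] `&` [set w | forall j, j \in s -> F j w = f j].
    apply/seteqP; split=> w /=.
      by move=> H; split=> [|j js]; apply: H; rewrite inE ?eqxx ?js ?orbT.
    by case=> H1 H2 j; rewrite inE => /orP[/eqP->|/H2].
  exact: measurableI (mF i (f i)) IH.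
have -> : [set w | [ffun i => F i w] = f] = [set w | forall i, i \in enum I -> F i w = f i].
  apply/seteqP; split=> w /=.
    by move=> <- i _; rewrite ffunE.
  by move=> H1; apply/ffunP=> i; rewrite ffunE; apply: H1; rewrite mem_enum.
exact: H.
Qed.

Lemma mlev_ext (V : finType) (F G : T -> V) : (forall w, F w = G w) -> mlev F -> mlev G.
Proof. by move=> FG mF v; under eq_set do rewrite -FG. Qed.

Definition phi (x : R) := x * log2 x.

Lemma entropyE (V : finType) (Z : T -> V) : entropy P Z = - \sum_v phi (Defs.pmf P Z v).
Proof. by []. Qed.

Lemma pmf_eq (V W : finType) (Z : T -> V) (Z' : T -> W) f g :
  (forall w, Z' w = f (Z w)) -> (forall w, Z w = g (Z' w)) ->
  forall v, g (f v) = v -> Defs.pmf P Z v = Defs.pmf P Z' (f v).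
Proof.
move=> hf hg v gfv; congr (prob P _); apply/seteqP; split=> w /=.
  by move=> <-; rewrite hf.
by move=> h; rewrite hg h gfv.
Qed.

Lemma sum_phi_supp (V W : finType) (Z : T -> V) (Z' : T -> W) f g :
  (forall w, Z' w = f (Z w)) -> (forall w, Z w = g (Z' w)) ->
  \sum_v phi (Defs.pmf P Z v) = \sum_(v | g (f v) == v) phi (Defs.pmf P Z v).
Proof.
move=> hf hg; rewrite (bigID (fun v => g (f v) == v)) /=.
rewrite [X in _ + X]big1 ?addr0 //.
move=> v /negP nv; rewrite /Defs.pmf (_ : [set w | Z w = v] = set0) ?prob0 /phi ?mul0r //.
apply/seteqP; split=> w //= Zw; apply: nv; by rewrite -Zw -hf -hg.
Qed.

Lemma ent_eq (V W : finType) (Z : T -> V) (Z' : T -> W) f g :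
  (forall w, Z' w = f (Z w)) -> (forall w, Z w = g (Z' w)) ->
  entropy P Z = entropy P Z'.
Proof.
move=> hf hg; rewrite !entropyE (@sum_phi_supp _ _ _ _ _ _ hf hg) (@sum_phi_supp _ _ _ _ _ _ hg hf).
rewrite (reindex_onto f g) /=; last by move=> u /eqP.
congr (- _); apply: eq_big => v.
  by case: (g (f v) =P v) => [->|]; rewrite ?eqxx ?andbF.
by move=> /eqP gfv; rewrite (@pmf_eq _ _ _ _ _ _ hf hg v gfv).
Qed.

Lemma cond_bound (V W : finType) (Z : T -> V) (S2 : T -> W) : mlev Z -> mlev S2 ->
  0 <= entropy P (fun w => (Z w, S2 w)) - entropy P Z <= #|W|%:R / ln 2.
Proof.
move=> mZ mS.
pose q z s := prob P ([set w | Z w = z] `&` [set w | S2 w = s]).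
pose p z := Defs.pmf P Z z.
have pq z : p z = \sum_s q z s by rewrite /q (@prob_part _ _ _ mS (mZ z)).
have q0 z s : 0 <= q z s by apply: prob_ge0.
have qp z s : q z s <= p z.
  by rewrite pq (bigD1 s) //= lerDl sumr_ge0.
have sp : \sum_z p z <= 1.
  have := @prob_part _ _ setT mZ measurableT.
  under eq_bigr do rewrite setTI.
  by move=> ->; apply: prob_le1.
have ln2 : 0 < ln (2 : R) by apply: ln_gt0; rewrite ltr1n.
have -> : entropy P (fun w => (Z w, S2 w)) - entropy P Z =
    \sum_z \sum_s (q z s * (ln (p z) - ln (q z s)) / ln 2).
  rewrite !entropyE opprK addrC.
  have -> : \sum_(v : V * W) phi (Defs.pmf P (fun w => (Z w, S2 w)) v) =
     \sum_z \sum_s phi (Defs.pmf P (fun w => (Z w, S2 w)) (z, s)).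
    by rewrite pair_bigA; apply: eq_bigr => -[].
  rewrite -sumrB; apply: eq_bigr => z _.
  rewrite /phi /log2 -/(p z) {1}pq mulr_suml -sumrB; apply: eq_bigr => s _.
  have -> : Defs.pmf P (fun w => (Z w, S2 w)) (z, s) = q z s.
    rewrite /Defs.pmf /q; congr (prob P _); apply/seteqP; split=> w /=.
      by case=> -> ->.
    by case=> -> ->.
  by rewrite !mulrA -mulrBl mulrBr.
have term z s : 0 <= q z s * (ln (p z) - ln (q z s)) / ln 2 <= p z / ln 2.
  have [->|qpos] := eqVneq (q z s) 0.
    by rewrite !mul0r lexx /= divr_ge0 ?(ltW ln2) // (le_trans (q0 z s)).
  have qgt : 0 < q z s by rewrite lt_def qpos q0.
  have pgt : 0 < p z by apply: lt_le_trans qgt (qp z s).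
  have -> : ln (p z) - ln (q z s) = ln (p z / q z s).
    by rewrite lnM ?lnV ?posrE ?invr_gt0.
  have r1 : 1 <= p z / q z s by rewrite ler_pdivlMr // mul1r.
  apply/andP; split.
    by rewrite divr_ge0 ?(ltW ln2) // mulr_ge0 // ln_ge0.
  rewrite ler_pM2r ?invr_gt0 //.
  have := ln_sublinear (lt_le_trans ltr01 r1).
  rewrite -(ltr_pM2l qgt) mulrCA divff ?mulr1 // => /ltW.
by [].
apply/andP; split.
  by apply: sumr_ge0 => z _; apply: sumr_ge0 => s _; case/andP: (term z s).
apply: (@le_trans _ _ (\sum_z \sum_(s : W) p z / ln 2)).
  by apply: ler_sum => z _; apply: ler_sum => s _; case/andP: (term z s).
under eq_bigr do rewrite sumr_const.
have -> : \sum_z p z / ln 2 *+ #|W| = (\sum_z p z) * (#|W|%:R / ln 2).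
  rewrite mulr_suml; apply: eq_bigr => z _.
  by rewrite -mulr_natr -!mulrA [_^-1 * _]mulrC.
 apply: ler_piMl => //.
by rewrite divr_ge0 ?(ltW ln2).
Qed.

End Prob.

Section Main.
Context {R : realType} {d : measure_display} {T : measurableType d}.
Variable P : probability T R.
Variables (A St : finType).
Variables (X : int -> T -> bool) (Y : int -> T -> A) (S : int -> T -> St).
Hypothesis hF : FAIM P X Y S.
Variable n : nat.

Definition Qn (k : nat) (w : T) : {ffun 'I_(2 ^ n) -> 'F_2} * {ffun 'I_(2 ^ n) -> A} :=
  ([ffun l : 'I_(2 ^ n) => if (l < k)%N then Uvec X n w 0 l else 0], Yvec Y n w).

Lemma mlev_X j : mlev (X j).
Proof. by move=> x; apply: (FAIM_meas_X hF). Qed.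
Lemma mlev_Y j : mlev (Y j).
Proof. by move=> x; apply: (FAIM_meas_Y hF). Qed.
Lemma mlev_S j : mlev (S j).
Proof. by move=> x; apply: (FAIM_meas_S hF). Qed.

Lemma mlev_Uvec : mlev (Uvec X n).
Proof.
have mXv : mlev (Xvec X n).
  apply: (@mlev_ext _ _ _ (fun w => (fun f : {ffun 'I_(2 ^ n) -> 'F_2} => \row_k f k)
     [ffun k : 'I_(2 ^ n) => ((X (k.+1 : nat)%:Z w : nat)%:R : 'F_2)])).
    by move=> w; apply/matrixP => i j; rewrite !mxE ffunE.
  apply: (@mlev_comp _ _ _ P _ _ (fun w => [ffun k : 'I_(2 ^ n) => ((X (k.+1 : nat)%:Z w : nat)%:R : 'F_2)])
     (fun f : {ffun 'I_(2 ^ n) -> 'F_2} => \row_k f k)).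
  apply: mlev_ffun => k.
  apply: (@mlev_comp _ _ _ P _ _ (X (k.+1 : nat)%:Z) (fun b : bool => ((b : nat)%:R : 'F_2))).
  exact: mlev_X.
exact: (@mlev_comp _ _ _ P _ _ (Xvec X n) (fun x => x *m G_N n) mXv).
Qed.

Lemma mlev_Qn k : mlev (Qn k).
Proof.
apply: mlev_pair.
  apply: mlev_ffun => l; apply: (@mlev_comp _ _ _ P _ _ (Uvec X n)
    (fun u => if (l < k)%N then u 0 l else 0)); exact: mlev_Uvec.
apply: mlev_ffun => l; exact: mlev_Y.
Qed.

Definition f0 (k : 'I_(2 ^ n)) (x : 'F_2 * ({ffun 'I_(2 ^ n) -> 'F_2} * {ffun 'I_(2 ^ n) -> A})) :=
  ([ffun l : 'I_(2 ^ n) => if (l : nat) == k then x.1 else x.2.1 l], x.2.2).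
Definition g0 (k : 'I_(2 ^ n)) (q : {ffun 'I_(2 ^ n) -> 'F_2} * {ffun 'I_(2 ^ n) -> A}) :=
  (q.1 k, ([ffun l : 'I_(2 ^ n) => if (l < k)%N then q.1 l else 0], q.2)).

Lemma f0_ok k w : f0 k (Ui X k w, Qi X Y k w) = Qn k.+1 w.
Proof.
rewrite /f0 /Qn /Qi /=; congr (_, _); apply/ffunP => l; rewrite !ffunE.
case: (ltngtP l k) => [lk|kl|lk].
- by rewrite ltnS (ltnW lk).
- by rewrite ltnS leqNgt kl /=.
- by rewrite lk ltnS leqnn /Ui; congr (Uvec X n w 0 _); apply: val_inj.
Qed.

Lemma g0_ok k w : g0 k (Qn k.+1 w) = (Ui X k w, Qi X Y k w).
Proof.
rewrite /g0 /Qn /Qi /= ffunE ltnS leqnn; congr (_, (_, _)).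
apply/ffunP => l; rewrite !ffunE.
by case: ifP => // lk; rewrite ltnS ltnW.
Qed.

Definition Hq (m : nat) := entropy P (Qn m).
Definition HqS (m : nat) := entropy P (fun w => (Qn m w, S (2 ^ n)%N%:Z w, S 0 w)).

Lemma Hn_atE (k : 'I_(2 ^ n)) : Hn_at P X Y k = Hq k.+1 - Hq k.
Proof.
rewrite /Hn_at /centropy /Hq; congr (_ - _).
by apply: (@ent_eq _ _ _ P _ _ _ _ (f0 k) (g0 k)) => w; rewrite ?f0_ok ?g0_ok.
Qed.

Lemma hatHn_atE (k : 'I_(2 ^ n)) : hatHn_at P X Y S k = HqS k.+1 - HqS k.
Proof.
rewrite /hatHn_at /centropy /HqS; congr (_ - _).
apply: (@ent_eq _ _ _ P _ _ _ _
  (fun x => (f0 k (x.1, x.2.1.1), x.2.1.2, x.2.2))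
  (fun y => ((g0 k y.1.1).1, ((g0 k y.1.1).2, y.1.2, y.2)))) => w.
  by rewrite /= f0_ok.
by rewrite (g0_ok k w).
Qed.

Lemma D_bound m : 0 <= HqS m - Hq m <= #|{: St * St}|%:R / ln 2.
Proof.
rewrite /HqS /Hq (@ent_eq _ _ _ P _ _ _ (fun w => (Qn m w, (S (2 ^ n)%N%:Z w, S 0 w)))
  (fun x => (x.1.1, (x.1.2, x.2))) (fun y => (y.1, y.2.1, y.2.2))) //.
apply: cond_bound; first exact: mlev_Qn.
by apply: mlev_pair; apply: mlev_S.
Qed.

Lemma sum_E : \sum_(k < 2 ^ n) (Hn_at P X Y k - hatHn_at P X Y S k) =
  (HqS 0 - Hq 0) - (HqS (2 ^ n) - Hq (2 ^ n)).
Proof.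
under eq_bigr do rewrite Hn_atE hatHn_atE.
rewrite sumrB -(big_mkord xpredT (fun k => Hq k.+1 - Hq k)).
rewrite -(big_mkord xpredT (fun k => HqS k.+1 - HqS k)) !telescope_sumr //.
ring.
Qed.

End Main.

Theorem lemma6 (R : realType) (d : measure_display) (T : measurableType d)
  (P : probability T R) (A St : finType)
  (X : int -> T -> bool) (Y : int -> T -> A) (S : int -> T -> St) :
  FAIM P X Y S ->
  (fun n : nat => E_DeltaH P X Y S n) @ \oo --> 0.
Proof.
move=> hF.
pose C : R := #|{: St * St}|%:R / ln (2:R).
have bnd : forall n, - (C * (2^-1)^+n) <= E_DeltaH P X Y S n <= C * (2^-1)^+n.
  move=> n; rewrite /E_DeltaH sum_E.
  have := D_bound P A St X Y S hF n 0; have := D_bound P A St X Y S hF n (2 ^ n).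
  rewrite -/C.
  have -> : (2^-1 : R)^+n = ((2 ^ n)%:R)^-1 by rewrite exprVn natrX.
  have ipos : 0 < ((2 ^ n)%:R : R)^-1 by rewrite invr_gt0 ltr0n expn_gt0.
  move: (((2 ^ n)%:R : R)^-1) ipos => i ipos.
  move=> /andP[h1 h2] /andP[h3 h4].
  apply/andP; split; nra.
apply: (@squeeze_cvgr _ _ _ _ (fun n => - (C * (2^-1)^+n)) (fun n => C * (2^-1)^+n)).
- exact: nearW bnd.
- rewrite -oppr0; apply: cvgN; apply: cvg_geometric.
  by rewrite gtr0_norm ?invr_gt0 // invf_lt1 // ltr1n.
- apply: cvg_geometric.
  by rewrite gtr0_norm ?invr_gt0 // invf_lt1 // ltr1n.
Qed.
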